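(* Let $G=(V,E)$ be a finite connected simple graph with vertex-weight $m_0\colon V\to\mathbb{R}_{>0}$ and distance parameter $d\colon E\to\mathbb{R}_{>0}$; set $M=\sum_{u\in V}m_0(u)$ and $D^2=\sum_{uv\in E}d(uv)^2$. Then $$\delta(G,m_0,d)=\max\Big\{1-\frac{D^2/M}{\sigma(G,m_0,d)},\,0\Big\}.$$
   Context: Edges are unordered pairs; $v\sim u$ means $uv\in E$; $\|\cdot\|$ is the Euclidean norm on $\mathbb{R}^{|V|}$. $\mathrm{bar}(\varphi)=\frac1M\sum_u m_0(u)\varphi(u)$. $\delta(G,m_0,d)=\inf\|\mathrm{bar}(\varphi)\|^2$ over all $\varphi\colon V\to\mathbb{R}^{|V|}$ with $\sum_u m_0(u)\|\varphi(u)\|^2=M$ and $\|\varphi(u)-\varphi(v)\|\le d(uv)$ for all $uv\in E$. For an edge-weight $m_1\colon E\to\mathbb{R}_{\ge0}$ with $(V,\{uv:m_1(uv)>0\})$ connected, the Laplacian is $(\Delta_{(m_0,m_1)}f)(u)=\frac{1}{m_0(u)}\big[(\sum_{v\sim u}m_1(uv))f(u)-\sum_{v\sim u}m_1(uv)f(v)\big]$ and $\lambda_1(G,(m_0,m_1))$ is its smallest positive eigenvalue, equivalently $\inf_f\frac{\sum_{uv}m_1(uv)(f(u)-f(v))^2}{\sum_u m_0(u)(f(u)-\bar f)^2}$ over nonconstant $f$, $\bar f=\frac1M\sum_u m_0(u)f(u)$. $\sigma(G,m_0,d)=\sup_{m_1}\lambda_1(G,(m_0,m_1))$ over all such edge-weights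 $m_1$ with $\sum_{uv\in E}m_1(uv)d(uv)^2=D^2$. *)

(* Defs.v *)
From HB Require Import structures.
From mathcomp Require Import all_boot all_order all_algebra.
From mathcomp Require Import all_classical all_reals.
Set Implicit Arguments. Unset Strict Implicit. Unset Printing Implicit Defensive.
Import Order.TTheory GRing.Theory Num.Theory.
Local Open Scope ring_scope.

Definition simple_graph (V : finType) (E : {set {set V}}) : Prop :=
  forall e, e \in E -> #|e| = 2%N.

Definition adj (V : finType) (E : {set {set V}}) : rel V :=
  fun u v => (u != v) && ([set u; v] \in E).

Definition connected_graph (V : finType) (E : {set {set V}}) : Prop :=
  forall u v : V, connect (adj E) u v.

Section Defs.
Variable R : realType.
Variable V : finType.

Definition total_mass (m0 : V -> R) : R := \sum_u m0 u.

Definition Dsq (E : {set {set V}}) (d : {set V} -> R) : R :=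
  \sum_(e in E) d e ^+ 2.

Definition enorm (x : 'rV[R]_#|V|) : R := Num.sqrt (\sum_i x ord0 i ^+ 2).

Definition bar (m0 : V -> R) (phi : V -> 'rV[R]_#|V|) : 'rV[R]_#|V| :=
  (total_mass m0)^-1 *: \sum_u m0 u *: phi u.

Definition admissible_embedding (E : {set {set V}}) (m0 : V -> R)
    (d : {set V} -> R) (phi : V -> 'rV[R]_#|V|) : Prop :=
  \sum_u m0 u * enorm (phi u) ^+ 2 = total_mass m0 /\
  forall u v, [set u; v] \in E -> u != v -> enorm (phi u - phi v) <= d [set u; v].

Definition delta (E : {set {set V}}) (m0 : V -> R) (d : {set V} -> R) : R :=
  inf [set enorm (bar m0 phi) ^+ 2 | phi in admissible_embedding E m0 d]%classic.

Definition mean (m0 : V -> R) (f : V -> R) : R :=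
  (total_mass m0)^-1 * \sum_u m0 u * f u.

Definition rayleigh (E : {set {set V}}) (m0 : V -> R) (m1 : {set V} -> R)
    (f : V -> R) : R :=
  (\sum_(e in E) m1 e * (\sum_(u in e) \sum_(v in e | u != v) (f u - f v) ^+ 2) / 2%:R)
  / (\sum_u m0 u * (f u - mean m0 f) ^+ 2).

Definition nonconstant (f : V -> R) : Prop := exists u v, f u != f v.

Definition lambda1 (E : {set {set V}}) (m0 : V -> R) (m1 : {set V} -> R) : R :=
  inf [set rayleigh E m0 m1 f | f in nonconstant]%classic.

Definition support_edges (E : {set {set V}}) (m1 : {set V} -> R) : {set {set V}} :=
  [set e in E | 0 < m1 e].

Definition admissible_edge_weight (E : {set {set V}}) (d : {set V} -> R)
    (m1 : {set V} -> R) : Prop :=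
  (forall e, e \in E -> 0 <= m1 e) /\
  connected_graph (support_edges E m1) /\
  \sum_(e in E) m1 e * d e ^+ 2 = Dsq E d.

Definition sigma (E : {set {set V}}) (m0 : V -> R) (d : {set V} -> R) : R :=
  sup [set lambda1 E m0 m1 | m1 in admissible_edge_weight E d]%classic.

End Defs.

(* Main.v *)
Require Import Defs.
From HB Require Import structures.
From mathcomp Require Import all_boot all_order all_algebra.
From mathcomp Require Import all_classical all_reals.
From mathcomp Require Import sequences exp.
From mathcomp Require Import ring lra.
Import Order.TTheory GRing.Theory Num.Theory.
Local Open Scope ring_scope.
Set Implicit Arguments. Unset Strict Implicit. Unset Printing Implicit Defensive.

Section ExpBound.
Variable R : realType.

Lemma expR_upper (y : R) : 0 <= y -> y <= 2^-1 -> expR y <= 1 + y + 2%:R * y ^+ 2.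
Proof.
move=> y0 yh.
have h1 : 1 - y <= expR (- y) by have := expR_ge1Dx (- y).
have hp : 0 < 1 - y by lra.
have hE : expR y = (expR (- y))^-1 by rewrite expRN invrK.
rewrite hE; apply: (le_trans (y := (1 - y)^-1)).
  by rewrite lef_pV2 ?posrE ?expR_gt0.
rewrite -[X in X <= _](mulr1) ler_pdivrMl //.
have : 0 <= y ^+ 2 * (1 - 2%:R * y) by rewrite mulr_ge0 ?sqr_ge0 //; lra.
move=> h; nra.
Qed.

End ExpBound.

Section MWU.
Variable R : realType.
Variable T : finType.
Variable E : {set T}.
Variable X : Type.
Variable P : X -> T -> R.
Variable Good : X -> Prop.
Variables (B v th eta : R).
Hypothesis Bpos : 0 < B.
Hypothesis Hk : (0 < #|E|)%N.
Hypothesis eta_pos : 0 < eta.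
Hypothesis eta_le : eta <= 2^-1.
Hypothesis PB : forall x e, Good x -> e \in E -> 0 <= P x e /\ P x e <= B.
Variable br : (T -> R) -> X.
Hypothesis Hbr : forall q, (forall e, e \in E -> 0 <= q e) -> \sum_(e in E) q e = 1 ->
  Good (br q) /\ \sum_(e in E) q e * P (br q) e <= v + th.

Definition Phi (S : T -> R) := \sum_(e in E) expR (eta * S e).
Definition qof (S : T -> R) : T -> R := fun e => expR (eta * S e) / Phi S.
Fixpoint cum (t : nat) : T -> R :=
  match t with
  | 0 => fun _ => 0
  | t'.+1 => fun e => cum t' e + P (br (qof (cum t'))) e / B
  end.
Definition xs t := br (qof (cum t)).
Definition G t := \sum_(e in E) qof (cum t) e * (P (xs t) e / B).

Lemma Phi_gt0 S : 0 < Phi S.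
Proof.
case/card_gt0P: Hk => e He; apply: (lt_le_trans (expR_gt0 (eta * S e))).
rewrite /Phi (bigD1 e) //= lerDl; apply: sumr_ge0 => *; exact: expR_ge0.
Qed.

Lemma qof_dist S : (forall e, e \in E -> 0 <= qof S e) /\ \sum_(e in E) qof S e = 1.
Proof.
split; first by move=> e _; rewrite divr_ge0 ?expR_ge0 // ltW ?Phi_gt0.
by rewrite -mulr_suml mulfV // gt_eqF ?Phi_gt0.
Qed.

Lemma good_xs t : Good (xs t).
Proof. by have [H1 H2] := qof_dist (cum t); have [] := Hbr H1 H2. Qed.

Lemma G_bound t : G t <= (v + th) / B.
Proof.
have [H1 H2] := qof_dist (cum t); have [_ H] := Hbr H1 H2.
rewrite /G (eq_bigr (fun e => qof (cum t) e * P (xs t) e / B)); last by move=> e _; rewrite mulrA.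
by rewrite -mulr_suml ler_wpM2r // invr_ge0 ltW.
Qed.

Lemma step t : Phi (cum t.+1) <= Phi (cum t) * expR (eta * G t + 2%:R * eta ^+ 2).
Proof.
set S := cum t.
apply: (le_trans (y := Phi S * (1 + (eta * G t + 2%:R * eta ^+ 2)))); last first.
  by rewrite ler_wpM2l ?expR_ge1Dx // ltW ?Phi_gt0.
have HG : Phi S * G t = \sum_(e in E) expR (eta * S e) * (P (xs t) e / B).
  rewrite /G mulr_sumr; apply: eq_bigr => e _.
  have hP : Phi S != 0 by rewrite gt_eqF ?Phi_gt0.
  by rewrite /qof -/S; field; rewrite hP gt_eqF.
rewrite mulrDr mulr1 mulrDr mulrA (mulrC _ eta) -mulrA HG.
apply: (le_trans (y := \sum_(e in E) expR (eta * S e) * (1 + eta * (P (xs t) e / B) + 2%:R * eta ^+ 2))); last first.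
  rewrite /Phi -/S mulr_sumr mulr_suml -!big_split /=.
  by apply: ler_sum => e _; rewrite le_eqVlt; apply/orP; left; apply/eqP; ring.
rewrite /Phi /=; apply: ler_sum => e He.
have [P0 PB'] := PB (good_xs t) He.
have g0 : 0 <= P (xs t) e / B by rewrite divr_ge0 // ltW.
have g1 : P (xs t) e / B <= 1 by rewrite ler_pdivrMr // mul1r.
rewrite mulrDr expRD -/S.
set W := expR (eta * S e); set g := P (xs t) e / B.
have W0 : 0 <= W by exact: expR_ge0.
have y0 : 0 <= eta * g by rewrite mulr_ge0 // ltW.
have y1 : eta * g <= eta by rewrite ler_piMr // ltW.
have := expR_upper y0 (le_trans y1 eta_le) => Hy.
have Hy2 : expR (eta * g) <= 1 + eta * g + 2%:R * eta ^+ 2.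
  apply: (le_trans Hy); rewrite lerD2l ler_wpM2l ?ler0n //.
  by rewrite ler_sqr ?nnegrE // ltW.
exact: (ler_wpM2l W0 Hy2).
Qed.


Lemma Phi_bound N :
  Phi (cum N) <= #|E|%:R * expR (\sum_(t < N) (eta * G t + 2%:R * eta ^+ 2)).
Proof.
elim: N => [|N IH].
  rewrite big_ord0 expR0 mulr1 /Phi /=.
  rewrite (eq_bigr (fun _ => 1)); last by move=> e _; rewrite mulr0 expR0.
  by rewrite sumr_const.
apply: (le_trans (step N)); rewrite big_ord_recr /= (expRD (\sum_(i < N) _)) mulrA.
by rewrite ler_wpM2r ?expR_ge0.
Qed.

Lemma cum_sum N e : cum N e = \sum_(t < N) P (xs t) e / B.
Proof.
elim: N => [|N IH]; first by rewrite big_ord0.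
by rewrite big_ord_recr /= IH.
Qed.

Lemma mwu_main N e : e \in E ->
  \sum_(t < N) P (xs t) e <=
    N%:R * (v + th) + B * #|E|%:R / eta + 2%:R * B * eta * N%:R.
Proof.
move=> He; set k := #|E|%:R.
set SP := \sum_(t < N) P (xs t) e.
have H1 : expR (eta * cum N e) <= expR (k + \sum_(t < N) (eta * G t + 2%:R * eta ^+ 2)).
  apply: (le_trans (y := Phi (cum N))).
    rewrite /Phi (bigD1 e) //= lerDl; apply: sumr_ge0 => *; exact: expR_ge0.
  apply: (le_trans (Phi_bound N)); rewrite expRD ler_wpM2r ?expR_ge0 //.
  by have := expR_ge1Dx k; lra.
rewrite ler_expR in H1.
have H2 : \sum_(t < N) (eta * G t + 2%:R * eta ^+ 2) <= N%:R * (eta * ((v + th) / B) + 2%:R * eta ^+ 2).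
  apply: (le_trans (y := \sum_(t < N) (eta * ((v + th) / B) + 2%:R * eta ^+ 2))).
    by apply: ler_sum => t _; rewrite lerD2r ler_wpM2l ?G_bound // ltW.
  by rewrite sumr_const card_ord [in X in _ <= X]mulr_natl.
have H3 : eta * (SP / B) <= k + N%:R * (eta * ((v + th) / B) + 2%:R * eta ^+ 2).
  rewrite /SP mulr_suml -cum_sum; exact: (le_trans H1 (lerD (le_refl k) H2)).
have -> : SP = (B / eta) * (eta * (SP / B)) by field; rewrite gt_eqF ?gt_eqF.
apply: (le_trans (ler_wpM2l _ H3)); first by rewrite divr_ge0 // ltW.
rewrite le_eqVlt; apply/orP; left; apply/eqP; field.
by rewrite gt_eqF ?gt_eqF.
Qed.

End MWU.

Section Reduce.
Variable R : realType.

Definition nsqN N (x : 'rV[R]_N) : R := \sum_i x ord0 i ^+ 2.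
Definition dotN N (x y : 'rV[R]_N) : R := \sum_i x ord0 i * y ord0 i.

Lemma dotN_mx N (x y : 'rV[R]_N) : dotN x y = (x *m y^T) ord0 ord0.
Proof. by rewrite mxE; apply: eq_bigr => i _; rewrite mxE. Qed.

Lemma dotNC N (x y : 'rV[R]_N) : dotN x y = dotN y x.
Proof. by apply: eq_bigr => i _; rewrite mulrC. Qed.

Lemma nsqN_expand N (x y : 'rV[R]_N) t :
  nsqN (x - t *: y) = nsqN x - 2%:R * t * dotN x y + t ^+ 2 * nsqN y.
Proof.
rewrite /nsqN /dotN mulr_sumr mulr_sumr -sumrB -big_split /=.
by apply: eq_bigr => i _; rewrite !mxE; ring.
Qed.

Lemma dotN_subr N (x y z : 'rV[R]_N) t : dotN x (y - t *: z) = dotN x y - t * dotN x z.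
Proof.
rewrite /dotN mulr_sumr -sumrB; apply: eq_bigr => i _; rewrite !mxE; ring.
Qed.

Lemma nsqN_ge0 N (x : 'rV[R]_N) : 0 <= nsqN x.
Proof. by apply: sumr_ge0 => i _; exact: sqr_ge0. Qed.

Lemma nsqN_eq0 N (x : 'rV[R]_N) : nsqN x = 0 -> x = 0.
Proof.
move=> H; apply/rowP => j; rewrite mxE.
have Hge : forall i, true -> 0 <= x ord0 i ^+ 2 by move=> i _; exact: sqr_ge0.
have := @psumr_eq0P _ _ _ _ Hge H j isT.
by move/eqP; rewrite sqrf_eq0 => /eqP; rewrite [ord0]ord1 => ->.
Qed.

Definition ebase N : 'rV[R]_N.+1 := \row_(j < N.+1) ((j == ord_max)%:R : R).

Lemma dotN_ebase N (x : 'rV[R]_N.+1) : dotN x (ebase N) = x ord0 ord_max.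
Proof.
rewrite /dotN (bigD1 ord_max) //= mxE eqxx mulr1 big1 ?addr0 // => i /negbTE Hi.
by rewrite mxE Hi mulr0.
Qed.

Lemma nsqN_ebase N : nsqN (ebase N) = 1.
Proof.
rewrite /nsqN (bigD1 ord_max) //= mxE eqxx expr1n big1 ?addr0 // => i /negbTE Hi.
by rewrite mxE Hi expr0n.
Qed.

Lemma ebase_max N : ebase N ord0 ord_max = 1.
Proof. by rewrite mxE eqxx. Qed.

Lemma householder N (w : 'rV[R]_N.+1) : w != 0 -> exists Hm : 'M[R]_N.+1,
  (forall x, nsqN (x *m Hm) = nsqN x) /\
  (forall x, dotN x w = 0 -> (x *m Hm) ord0 ord_max = 0).
Proof.
move=> wn0.
have nw : 0 < nsqN w.
  rewrite lt_neqAle nsqN_ge0 andbT eq_sym; apply/eqP => H; move/eqP: wn0; apply.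
  exact: nsqN_eq0.
set na := Num.sqrt (nsqN w).
have na0 : 0 < na by rewrite sqrtr_gt0.
set wN := w ord0 ord_max.
have [s [s2 [s0 swN]]] : exists s, s ^+ 2 = nsqN w /\ s != 0 /\ s != wN.
  have [e1|ne1] := eqVneq na wN.
    exists (- na); rewrite sqrrN sqr_sqrtr ?nsqN_ge0 //; split => //; split.
      by rewrite oppr_eq0 gt_eqF.
    by rewrite -e1; apply/eqP => h; move: na0; lra.
  by exists na; rewrite sqr_sqrtr ?nsqN_ge0 //; split => //; split => //; rewrite gt_eqF.
set v := w - s *: ebase N.
have Hv : nsqN v = 2%:R * (s ^+ 2 - s * wN).
  by rewrite /v nsqN_expand dotN_ebase nsqN_ebase -/wN s2; ring.
have Dn0 : s ^+ 2 - s * wN != 0.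
  have -> : s ^+ 2 - s * wN = s * (s - wN) by ring.
  by rewrite mulf_neq0 // subr_eq0.
have nv0 : nsqN v != 0 by rewrite Hv mulf_neq0 // pnatr_eq0.
set c := 2%:R / nsqN v.
have cnv : c * nsqN v = 2%:R by rewrite /c mulfVK.
pose Hm : 'M[R]_N.+1 := 1%:M - c *: (v^T *m v).
have HmE : forall x, x *m Hm = x - (c * dotN x v) *: v.
  move=> x; rewrite /Hm mulmxBr mulmx1 -scalemxAr mulmxA.
  rewrite [x *m v^T]mx11_scalar mul_scalar_mx scalerA -dotN_mx //.
exists Hm; split.
  move=> x; rewrite HmE nsqN_expand.
  have -> : (c * dotN x v) ^+ 2 * nsqN v = c * dotN x v ^+ 2 * (c * nsqN v) by ring.
  rewrite cnv; ring.
move=> x xw.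
have dxv : dotN x v = - (s * x ord0 ord_max) by rewrite /v dotN_subr xw dotN_ebase sub0r.
rewrite HmE !mxE eqxx dxv /c Hv -/wN /= mulr1.
field; rewrite Dn0 ?pnatr_eq0 //.
Qed.


Definition Dm N : 'M[R]_(N.+1, N) :=
  \matrix_(i, j) ((i == widen_ord (leqnSn N) j)%:R : R).

Lemma Dm_entry N (y : 'rV[R]_N.+1) j : (y *m Dm N) ord0 j = y ord0 (widen_ord (leqnSn N) j).
Proof.
rewrite mxE (bigD1 (widen_ord (leqnSn N) j)) //= mxE eqxx mulr1 big1 ?addr0 // => i /negbTE Hi.
by rewrite mxE Hi mulr0.
Qed.

Lemma nsqN_Dm N (y : 'rV[R]_N.+1) : nsqN (y *m Dm N) = nsqN y - y ord0 ord_max ^+ 2.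
Proof.
rewrite [nsqN y]/nsqN big_ord_recr /= addrK; apply: eq_bigr => j _; by rewrite Dm_entry.
Qed.

Variable V : finType.

Definition pres N N' (psi : V -> 'rV[R]_N) (psi' : V -> 'rV[R]_N') :=
  forall a : V -> R, nsqN (\sum_u a u *: psi' u) = nsqN (\sum_u a u *: psi u).

Lemma comb_mul N N' (psi : V -> 'rV[R]_N) (W : 'M[R]_(N, N')) (a : V -> R) :
  \sum_u a u *: (psi u *m W) = (\sum_u a u *: psi u) *m W.
Proof. by rewrite mulmx_suml; apply: eq_bigr => u _; rewrite scalemxAl. Qed.

Lemma step_reduce N (psi : V -> 'rV[R]_N.+1) : (#|V| < N.+1)%N ->
  exists psi' : V -> 'rV[R]_N, pres psi psi'.
Proof.
move=> HN.
pose A : 'M[R]_(#|V|, N.+1) := \matrix_(i, j) psi (enum_val i) ord0 j.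
pose K := kermx A^T.
have K0 : K != 0.
  rewrite -mxrank_eq0 mxrank_ker.
  have := rank_leq_col A^T; move: (\rank A^T) => r Hr.
  by rewrite subn_eq0 -ltnNge (leq_ltn_trans Hr HN).
have [i0 Hi0] : exists i, row i K != 0.
  case: (pselect (exists i, row i K != 0)) => // H; move/eqP: K0; case.
  apply/row_matrixP => i; rewrite row0; apply/eqP; apply/negPn/negP => Hn; apply: H.
  by exists i.
set w := row i0 K.
have wA : w *m A^T = 0 by apply/sub_kermxP; exact: row_sub.
have orth : forall u, dotN (psi u) w = 0.
  move=> u; rewrite dotNC.
  have /rowP /(_ (enum_rank u)) := wA; rewrite mxE [RHS]mxE => <-.
  by rewrite /dotN; apply: eq_bigr => k _; rewrite !mxE enum_rankK.
have [Hm [Hn Hz]] := householder Hi0.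
exists (fun u => psi u *m (Hm *m Dm N)) => a.
rewrite comb_mul mulmxA nsqN_Dm Hn Hz ?expr0n ?subr0 //=.
rewrite dotN_mx mulmx_suml summxE big1 // => u _; rewrite -scalemxAl mxE.
by rewrite -dotN_mx orth mulr0.
Qed.

Lemma pres_trans N1 N2 N3 (p1 : V -> 'rV[R]_N1) (p2 : V -> 'rV[R]_N2) (p3 : V -> 'rV[R]_N3) :
  pres p1 p2 -> pres p2 p3 -> pres p1 p3.
Proof. by move=> H1 H2 a; rewrite H2 H1. Qed.

Lemma reduce k (psi : V -> 'rV[R]_(k + #|V|)) :
  exists psi' : V -> 'rV[R]_#|V|, pres psi psi'.
Proof.
elim: k psi => [|k IH] psi; first by exists psi.
have Hlt : (#|V| < (k + #|V|).+1)%N by rewrite ltnS leq_addl.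
have [p2 H2] := step_reduce (psi : V -> 'rV[R]_((k + #|V|).+1)) Hlt.
have [p3 H3] := IH p2.
by exists p3; apply: pres_trans H2 H3.
Qed.

End Reduce.

Section Basics.
Variable R : realType.
Variable V : finType.

Definition Qe (f : V -> R) (e : {set V}) : R :=
  (\sum_(u in e) \sum_(v in e | u != v) (f u - f v) ^+ 2) / 2%:R.

Definition var (m0 : V -> R) (f : V -> R) : R :=
  \sum_u m0 u * (f u - mean m0 f) ^+ 2.

Lemma sum_set2 (F : V -> R) a b : a != b -> \sum_(u in [set a; b]) F u = F a + F b.
Proof.
move=> ab; rewrite (bigD1 a) ?inE ?eqxx //= (bigD1 b) ?inE ?eqxx ?orbT //=; last by rewrite eq_sym.
rewrite big_pred0 ?addr0 // => x; rewrite !inE; by case: (x == a); case: (x == b).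
Qed.

Lemma Qe_pair f a b : a != b -> Qe f [set a; b] = (f a - f b) ^+ 2.
Proof.
move=> ab; rewrite /Qe sum_set2 //.
rewrite (big_pred1 b); last first.
  move=> x; rewrite /= !inE; have [->|xa] := eqVneq x a; first by rewrite /= (negbTE ab).
  by rewrite orFb andbT.
rewrite (big_pred1 a); last first.
  move=> x; rewrite /= !inE; have [->|xa] := eqVneq x a; first by rewrite /= eq_sym.
  by rewrite orFb; case: eqP => [->|]; rewrite ?eqxx.
have -> : (f b - f a) ^+ 2 = (f a - f b) ^+ 2 by rewrite -sqrrN opprB.
by field.
Qed.

Lemma Qe_ge0 f e : 0 <= Qe f e.
Proof.
by rewrite /Qe divr_ge0 // ?ler0n // sumr_ge0 // => u _; rewrite sumr_ge0 // => v _; rewrite sqr_ge0.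
Qed.


Variable E : {set {set V}}.
Variables (m0 : V -> R) (d : {set V} -> R).
Hypothesis HV : (0 < #|V|)%N.
Hypothesis Hs : simple_graph E.
Hypothesis Hc : connected_graph E.
Hypothesis Hm : forall u, 0 < m0 u.
Hypothesis Hd : forall e, e \in E -> 0 < d e.

Local Notation M := (total_mass m0).
Local Notation D2 := (Dsq E d).

Lemma M_gt0 : 0 < M.
Proof.
case/card_gt0P: HV => u _.
apply: (lt_le_trans (Hm u)); rewrite /total_mass (bigD1 u) //= lerDl.
by apply: sumr_ge0 => v _; exact: ltW.
Qed.

Lemma M_neq0 : M != 0.
Proof. by rewrite gt_eqF // M_gt0. Qed.

Lemma sumE (f : V -> R) : \sum_u m0 u * f u = M * mean m0 f.
Proof. by rewrite /mean mulrA mulfV ?mul1r // M_neq0. Qed.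

Lemma var_ge0 f : 0 <= var m0 f.
Proof. by apply: sumr_ge0 => u _; rewrite mulr_ge0 ?sqr_ge0 // ltW. Qed.

Lemma sumsq_decomp f : \sum_u m0 u * f u ^+ 2 = M * mean m0 f ^+ 2 + var m0 f.
Proof.
set mu := mean m0 f.
have H : var m0 f - \sum_u m0 u * f u ^+ 2 = \sum_u (m0 u * mu ^+ 2 - 2%:R * mu * (m0 u * f u)).
  rewrite /var -sumrB; apply: eq_bigr => u _; rewrite -/mu; ring.
rewrite sumrB -mulr_suml -mulr_sumr (sumE f) -/mu in H.
have HM : \sum_u m0 u = M by [].
rewrite HM in H.
have -> : \sum_u m0 u * f u ^+ 2 = var m0 f - (M * mu ^+ 2 - 2%:R * mu * (M * mu)) by rewrite -H; ring.
ring.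
Qed.

Lemma mean_const f u : (forall v, f v = f u) -> mean m0 f = f u.
Proof.
move=> Hf; rewrite /mean (eq_bigr (fun v => m0 v * f u)); last by move=> v _; rewrite Hf.
by rewrite -mulr_suml mulrA mulVf ?mul1r // M_neq0.
Qed.

Lemma var_const f u : (forall v, f v = f u) -> var m0 f = 0.
Proof.
move=> Hf; rewrite /var big1 // => v _; rewrite (mean_const Hf) Hf subrr expr0n /= mulr0 //.
Qed.

Lemma var_eq0 f : var m0 f = 0 -> forall u v, f u = f v.
Proof.
move=> H.
have Hge : forall i, true -> 0 <= m0 i * (f i - mean m0 f) ^+ 2.
  by move=> ? _; rewrite mulr_ge0 ?sqr_ge0 // ltW.
have H1 : forall u, f u = mean m0 f.
  move=> u; have := @psumr_eq0P _ _ _ _ Hge H u isT.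
  have m0n : m0 u != 0 by rewrite gt_eqF ?Hm.
  by move/eqP; rewrite mulf_eq0 (negbTE m0n) /= sqrf_eq0 subr_eq0 => /eqP.
by move=> u v; rewrite !H1.
Qed.

Lemma nonconstant_var f : nonconstant f -> 0 < var m0 f.
Proof.
case=> u [v] neq; rewrite lt_neqAle var_ge0 andbT eq_sym; apply/negP => /eqP H.
by move: neq; rewrite (var_eq0 H u v) eqxx.
Qed.

Lemma var_nonconstant f : var m0 f != 0 -> nonconstant f.
Proof.
move=> H; case: (pselect (nonconstant f)) => // nc; exfalso; move/negP: H; apply.
case/card_gt0P: HV => u _.
apply/eqP; apply: (var_const (u := u)) => v; apply/eqP; apply/negPn/negP => nv.
by apply: nc; exists v, u.
Qed.

Lemma rayleighE m1 f :
  rayleigh E m0 m1 f = (\sum_(e in E) m1 e * Qe f e) / var m0 f.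
Proof. by rewrite /rayleigh /Qe /var; congr (_ / _); apply: eq_bigr => e _; rewrite mulrA. Qed.

Lemma lambda1_ineq m1 (Hm1 : forall e, e \in E -> 0 <= m1 e) g :
  lambda1 E m0 m1 * var m0 g <= \sum_(e in E) m1 e * Qe g e.
Proof.
have H0 : 0 <= \sum_(e in E) m1 e * Qe g e.
  by apply: sumr_ge0 => e He; rewrite mulr_ge0 ?Hm1 ?Qe_ge0.
have [vg0|vgn0] := eqVneq (var m0 g) 0; first by rewrite vg0 mulr0.
have vpos : 0 < var m0 g by rewrite lt_neqAle eq_sym vgn0 var_ge0.
have nc := var_nonconstant vgn0.
have Hle : lambda1 E m0 m1 <= rayleigh E m0 m1 g.
  apply: ge_inf; last by exists g.
  exists 0 => _ [f _ <-]; rewrite rayleighE divr_ge0 ?var_ge0 //.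
  by apply: sumr_ge0 => e He; rewrite mulr_ge0 ?Hm1 ?Qe_ge0.
apply: (le_trans (ler_wpM2r (ltW vpos) Hle)).
by rewrite rayleighE divfK.
Qed.


Local Notation n := #|V|.
Definition nsq (x : 'rV[R]_n) : R := \sum_i x ord0 i ^+ 2.

Lemma nsq_ge0 (x : 'rV[R]_n) : 0 <= nsq x.
Proof. by apply: sumr_ge0 => i _; rewrite sqr_ge0. Qed.

Lemma enorm_sq (x : 'rV[R]_n) : enorm x ^+ 2 = nsq x.
Proof. by rewrite /enorm sqr_sqrtr // nsq_ge0. Qed.

Lemma enorm_ge0 (x : 'rV[R]_n) : 0 <= enorm x.
Proof. exact: sqrtr_ge0. Qed.

Definition gi (phi : V -> 'rV[R]_n) (i : 'I_n) : V -> R := fun u => phi u ord0 i.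

Lemma bar_coord phi i : bar m0 phi ord0 i = mean m0 (gi phi i).
Proof. by rewrite /bar mxE summxE /mean; congr (_ * _); apply: eq_bigr => u _; rewrite mxE. Qed.

Lemma nsq_diff phi a b : a != b -> nsq (phi a - phi b) = \sum_i Qe (gi phi i) [set a; b].
Proof. by move=> ab; apply: eq_bigr => i _; rewrite Qe_pair // !mxE. Qed.

Lemma mass_decomp phi :
  \sum_u m0 u * nsq (phi u) = M * nsq (bar m0 phi) + \sum_i var m0 (gi phi i).
Proof.
rewrite /nsq; under eq_bigr do rewrite mulr_sumr.
rewrite exchange_big /= mulr_sumr -big_split /=; apply: eq_bigr => i _.
by rewrite bar_coord -sumsq_decomp.
Qed.

Lemma edge_pair e : e \in E -> exists a b, a != b /\ e = [set a; b].
Proof. by move=> He; have /eqP/cards2P [a [b [ab ->]]] := Hs He; exists a, b. Qed.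

Lemma le_sum1 (I : finType) (P : pred I) (F : I -> R) i :
  (forall j, P j -> 0 <= F j) -> P i -> F i <= \sum_(j | P j) F j.
Proof.
move=> H Pi; rewrite (bigD1 i) //= lerDl; apply: sumr_ge0 => j /andP [Pj _]; exact: H.
Qed.

Definition adm_m1 m1 := admissible_edge_weight E d m1.
Definition Ssig := [set lambda1 E m0 m1 | m1 in adm_m1]%classic.

Lemma sigmaE : sigma E m0 d = sup Ssig.
Proof. by []. Qed.

Lemma one_adm : adm_m1 (fun _ => 1).
Proof.
split; first by move=> *; exact: ler01.
split; last by rewrite /Dsq; apply: eq_bigr => e _; rewrite mul1r.
have -> : support_edges E (fun _ => 1 : R) = E by apply/setP => e; rewrite inE ltr01 andbT.
exact: Hc.
Qed.

Definition Sf f := \sum_(e in E) Qe f e.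

Lemma Sf_ge0 f : 0 <= Sf f.
Proof. by apply: sumr_ge0 => e _; exact: Qe_ge0. Qed.

Lemma adj_bound f a b : adj E a b -> `|f a - f b| <= Num.sqrt (Sf f).
Proof.
case/andP => ab He; rewrite -sqrtr_sqr ler_sqrt ?Sf_ge0 //.
rewrite -Qe_pair //; apply: (le_sum1 (P := fun e => e \in E)) => // *; exact: Qe_ge0.
Qed.

Lemma path_bound f x p : path (adj E) x p ->
  `|f x - f (last x p)| <= (size p)%:R * Num.sqrt (Sf f).
Proof.
elim: p x => [|y p IH] x /=; first by rewrite subrr normr0 mul0r.
case/andP => Hxy Hp; apply: (le_trans (ler_distD (f y) _ _)).
rewrite -addn1 natrD mulrDl mul1r addrC; apply: lerD; [exact: IH | exact: adj_bound].
Qed.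

Lemma conn_bound : exists C, 0 < C /\ forall f, var m0 f <= C * Sf f.
Proof.
have H1 : forall uv : V * V, exists L : nat, forall f,
    `|f uv.1 - f uv.2| <= L%:R * Num.sqrt (Sf f).
  case=> u v; have /connectP [p Hp ->] := Hc u v; exists (size p) => f; exact: path_bound.
case: (boolp.choice H1) => L HL.
pose K : R := \sum_(uv : V * V) (L uv)%:R.
have K0 : 0 <= K by apply: sumr_ge0 => *; exact: ler0n.
have HK : forall f u v, `|f u - f v| <= K * Num.sqrt (Sf f).
  move=> f u v; apply: (le_trans (HL (u, v) f)); apply: ler_wpM2r; first exact: sqrtr_ge0.
  by apply: (le_sum1 (P := xpredT)) => // *; exact: ler0n.
have Hmean : forall f u, `|f u - mean m0 f| <= K * Num.sqrt (Sf f).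
  move=> f u.
  have E1 : f u - mean m0 f = M^-1 * \sum_v m0 v * (f u - f v).
    rewrite (eq_bigr (fun v => m0 v * f u - m0 v * f v)); last by move=> v _; rewrite mulrBr.
    rewrite sumrB -mulr_suml (sumE f) mulrBr mulrA mulVf ?M_neq0 // mul1r mulrA mulVf ?M_neq0 //.
    by rewrite mul1r.
  rewrite E1 normrM normfV (gtr0_norm M_gt0).
  rewrite mulrC ler_pdivrMr ?M_gt0 //; apply: (le_trans (ler_norm_sum _ _ _)).
  apply: (le_trans (y := \sum_v m0 v * (K * Num.sqrt (Sf f)))).
    apply: ler_sum => v _; rewrite normrM gtr0_norm ?Hm //; apply: ler_wpM2l; [exact: ltW | exact: HK].
  by rewrite -mulr_suml mulrC.
exists (M * K ^+ 2 + 1); split.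
  by apply: ltr_wpDl; [rewrite mulr_ge0 ?sqr_ge0 // ltW ?M_gt0 | exact: ltr01].
move=> f.
apply: (le_trans (y := M * K ^+ 2 * Sf f)); last first.
  by rewrite mulrDl mul1r lerDl Sf_ge0.
rewrite /var -mulrA mulr_suml; apply: ler_sum => u _.
apply: ler_wpM2l; first exact: ltW.
have h := Hmean f u; have := ler_pM (normr_ge0 _) (normr_ge0 _) h h.
rewrite -normrM -expr2 ger0_norm ?sqr_ge0 // => H; apply: (le_trans H).
by rewrite mulrACA -expr2 -expr2 sqr_sqrtr ?Sf_ge0.
Qed.


Lemma rayleigh_ge0 m1 (Hm1 : forall e, e \in E -> 0 <= m1 e) f :
  0 <= rayleigh E m0 m1 f.
Proof.
rewrite rayleighE divr_ge0 ?var_ge0 //.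
by apply: sumr_ge0 => e He; rewrite mulr_ge0 ?Hm1 ?Qe_ge0.
Qed.

Lemma D2_ge0 : 0 <= D2.
Proof. by apply: sumr_ge0 => e _; rewrite sqr_ge0. Qed.

Lemma ind_nonconstant (u v : V) : u != v ->
  nonconstant (fun x => if x == u then 1 else 0 : R).
Proof.
move=> uv; exists u, v; have vu : (v == u) = false by rewrite eq_sym (negbTE uv).
by rewrite eqxx vu oner_neq0.
Qed.

Lemma Ssig_ub (u v : V) : u != v -> has_ubound Ssig.
Proof.
move=> uv; pose f0 : V -> R := fun x => if x == u then 1 else 0.
have nc : nonconstant f0 := ind_nonconstant uv.
pose K0 := \sum_(e in E) Qe f0 e / d e ^+ 2.
exists (D2 * K0 / var m0 f0) => _ [m1 [Hm1 [_ Hsum]] <-].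
apply: (le_trans (y := rayleigh E m0 m1 f0)).
  apply: ge_inf; last by exists f0.
  by exists 0 => _ [f _ <-]; exact: rayleigh_ge0.
rewrite rayleighE; apply: ler_wpM2r; first by rewrite invr_ge0 var_ge0.
rewrite -Hsum mulr_suml; apply: ler_sum => e He.
rewrite -mulrA; apply: ler_wpM2l; first exact: Hm1.
have dpos : 0 < d e ^+ 2 by rewrite exprn_gt0 ?Hd.
rewrite -ler_pdivrMl //.
rewrite mulrC; apply: (le_sum1 (P := fun e => e \in E) (F := fun e => Qe f0 e / d e ^+ 2)) => // j _.
by rewrite divr_ge0 ?Qe_ge0 ?sqr_ge0.
Qed.

Lemma sigma_gt0 (u v : V) : u != v -> 0 < sigma E m0 d.
Proof.
move=> uv; have [C [C0 HC]] := conn_bound.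
apply: (lt_le_trans (y := lambda1 E m0 (fun _ => 1))).
  apply: (lt_le_trans (y := C^-1)); first by rewrite invr_gt0.
  apply: lb_le_inf; first by exists (rayleigh E m0 (fun _ => 1) (fun x => if x == u then 1 else 0));
    exists (fun x => if x == u then 1 else 0) => //; exact: ind_nonconstant uv.
  move=> _ [f nc <-]; rewrite rayleighE ler_pdivlMr ?nonconstant_var //.
  rewrite (eq_bigr (fun e => Qe f e)); last by move=> e _; rewrite mul1r.
  by rewrite ler_pdivrMl //; exact: HC.
apply: (ub_le_sup (Ssig_ub uv)); exists (fun _ => 1) => //; exact: one_adm.
Qed.

Lemma key_ineq phi m1 : admissible_embedding E m0 d phi -> adm_m1 m1 ->
  lambda1 E m0 m1 * \sum_i var m0 (gi phi i) <= D2.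
Proof.
case=> _ Hedge [Hm1 [_ Hsum]].
rewrite mulr_sumr.
apply: (le_trans (ler_sum _ (fun i _ => lambda1_ineq Hm1 (gi phi i)))).
rewrite exchange_big /= -Hsum; apply: ler_sum => e He.
rewrite -mulr_sumr; apply: ler_wpM2l; first exact: Hm1.
have [a [b [ab Hab]]] := edge_pair He; rewrite Hab in He *.
rewrite -nsq_diff // -enorm_sq.
have H := Hedge a b He ab.
by rewrite !expr2; apply: ler_pM => //; exact: enorm_ge0.
Qed.

Lemma no_edges : ~ (exists u v : V, u != v) -> D2 = 0.
Proof.
move=> H; apply: big1 => e He; exfalso; have [a [b [ab _]]] := edge_pair He.
by apply: H; exists a, b.
Qed.

Lemma part1 phi : admissible_embedding E m0 d phi ->
  Num.max (1 - D2 / M / sigma E m0 d) 0 <= enorm (bar m0 phi) ^+ 2.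
Proof.
move=> Hphi.
set W := \sum_i var m0 (gi phi i).
have W0 : 0 <= W by apply: sumr_ge0 => i _; exact: var_ge0.
have HM : M * nsq (bar m0 phi) + W = M.
  have := Hphi.1; rewrite (eq_bigr (fun u => m0 u * nsq (phi u))); last by move=> u _; rewrite enorm_sq.
  by rewrite mass_decomp.
have Hb : enorm (bar m0 phi) ^+ 2 = 1 - W / M.
  rewrite enorm_sq; apply: (mulfI M_neq0); rewrite mulrBr mulr1 mulrCA mulfV ?M_neq0 // mulr1.
  by rewrite -{2}HM addrK.
have WM : W <= M by rewrite -HM lerDr mulr_ge0 ?nsq_ge0 // ltW ?M_gt0.
rewrite Hb ge_max; apply/andP; split; last first.
  by rewrite subr_ge0 ler_pdivrMr ?M_gt0 // mul1r.
apply: lerB => //; rewrite mulrAC; apply: ler_wpM2r; first by rewrite invr_ge0 ltW ?M_gt0.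
case: (pselect (exists u v : V, u != v)) => [[u [v uv]]|nuv]; last first.
  rewrite no_edges // mul0r.
  suff -> : W = 0 by [].
  apply: big1 => i _; case/card_gt0P: HV => u0 _.
  apply: (var_const (u := u0)) => v; apply/eqP; apply/negPn/negP => nv; apply: nuv.
  by exists v, u0; apply/eqP => vu; move: nv; rewrite vu eqxx.
have sp := sigma_gt0 uv.
have [->|Wn0] := eqVneq W 0; first by rewrite divr_ge0 ?D2_ge0 // ltW.
have Wp : 0 < W by rewrite lt_neqAle eq_sym Wn0 W0.
have Hs' : sigma E m0 d <= D2 / W.
  apply: ge_sup; first by exists (lambda1 E m0 (fun _ => 1)); exists (fun _ => 1) => //; exact: one_adm.
  move=> _ [m1 Hm1 <-]; rewrite ler_pdivlMr //; exact: key_ineq.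
by rewrite ler_pdivlMr // mulrC -ler_pdivlMr.
Qed.


Definition Good (g : V -> R) := var m0 g = 1 /\ mean m0 g = 0.
Definition Pe (g : V -> R) (e : {set V}) := Qe g e / d e ^+ 2.

Lemma edge_exists (u v : V) : u != v -> exists e, e \in E.
Proof.
move=> uv; have /connectP [p Hp Hl] := Hc u v.
case: p Hp Hl => [|y p] /=; first by move=> _ Huv; move: uv; rewrite Huv eqxx.
by case/andP => /andP [_ He] _ _; exists [set u; y].
Qed.

Lemma D2_gt0 (u v : V) : u != v -> 0 < D2.
Proof.
move=> uv; have [e He] := edge_exists uv.
apply: (lt_le_trans _ (le_sum1 (P := fun e => e \in E) (F := fun e => d e ^+ 2) _ He)).
  by rewrite exprn_gt0 ?Hd.
by move=> j _; exact: sqr_ge0.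
Qed.

Lemma mean_aff a b f : mean m0 (fun x => a * f x + b) = a * mean m0 f + b.
Proof.
rewrite /mean (eq_bigr (fun x => a * (m0 x * f x) + b * m0 x)); last by move=> x _; ring.
rewrite big_split -!mulr_sumr /= -/(total_mass m0).
by field; rewrite M_neq0.
Qed.

Lemma var_aff a b f : var m0 (fun x => a * f x + b) = a ^+ 2 * var m0 f.
Proof. by rewrite /var mean_aff mulr_sumr; apply: eq_bigr => x _; ring. Qed.

Lemma Qe_aff a b f e : Qe (fun x => a * f x + b) e = a ^+ 2 * Qe f e.
Proof.
rewrite /Qe mulrA mulr_sumr; congr (_ / _); apply: eq_bigr => x _.
by rewrite mulr_sumr; apply: eq_bigr => y _; ring.
Qed.

Lemma BR (u v : V) (uv : u != v) (q : {set V} -> R) th :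
  (forall e, e \in E -> 0 <= q e) -> \sum_(e in E) q e = 1 -> 0 < th ->
  exists g, Good g /\ \sum_(e in E) q e * Pe g e <= sigma E m0 d / D2 + th.
Proof.
move=> q0 q1 th0.
have sp := sigma_gt0 uv; have Dp := D2_gt0 uv; have [e0 He0] := edge_exists uv.
set k : R := #|E|%:R.
have kp : 0 < k by rewrite ltr0n; apply/card_gt0P; exists e0.
set sg := sigma E m0 d.
set th' := th * D2 / 2%:R.
have th'0 : 0 < th' by rewrite divr_gt0 ?mulr_gt0 ?ltr0n.
set t := th' / (sg + 2%:R * th').
have den0 : 0 < sg + 2%:R * th' by rewrite ltr_wpDl ?ltW // mulr_gt0 ?ltr0n.
have t0 : 0 < t by rewrite divr_gt0.
have t1 : t < 1 by rewrite ltr_pdivrMr // mul1r; move: sp th'0; rewrite -/sg; lra.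
pose m1 := fun e => D2 * ((1 - t) * q e + t / k) / d e ^+ 2.
have m1pos : forall e, e \in E -> 0 < m1 e.
  move=> e He; rewrite /m1 divr_gt0 ?exprn_gt0 ?Hd // mulr_gt0 //.
  apply: ltr_wpDl; last by rewrite divr_gt0.
  by rewrite mulr_ge0 ?q0 // subr_ge0 ltW.
have adm : adm_m1 m1.
  split; first by move=> e He; exact: ltW (m1pos e He).
  split.
    have -> : support_edges E m1 = E.
      by apply/setP => e; rewrite inE; case He: (e \in E) => //=; rewrite m1pos.
    exact: Hc.
  rewrite (eq_bigr (fun e => D2 * ((1 - t) * q e + t / k))); last first.
    by move=> e He; rewrite /m1 divfK // expf_neq0 // gt_eqF ?Hd.
  rewrite -mulr_sumr big_split /= -mulr_sumr q1 sumr_const -mulr_natr -/k.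
  by rewrite divfK ?gt_eqF // mulr1 subrK mulr1.
have lam_le : lambda1 E m0 m1 <= sg.
  by apply: (ub_le_sup (Ssig_ub uv)); exists m1.
have : lambda1 E m0 m1 < sg + th' by apply: (le_lt_trans lam_le); rewrite ltrDl.
case/inf_lt.
  by exists (rayleigh E m0 m1 (fun x => if x == u then 1 else 0));
    exists (fun x => if x == u then 1 else 0) => //; exact: ind_nonconstant uv.
move=> _ [f nc <-] Hf.
set a := (Num.sqrt (var m0 f))^-1; set b := - (mean m0 f * a).
set g := fun x => a * f x + b.
have vp := nonconstant_var nc.
have a2 : a ^+ 2 = (var m0 f)^-1 by rewrite /a exprVn sqr_sqrtr // ltW.
exists g; split.
  split; first by rewrite /g var_aff a2 mulVf // gt_eqF.
  by rewrite /g mean_aff /b; ring.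
have Hsum : \sum_(e in E) m1 e * Qe g e = rayleigh E m0 m1 f.
  rewrite rayleighE mulr_suml; apply: eq_bigr => e _; rewrite /g Qe_aff a2.
  by rewrite mulrCA mulrC.
have Hlow : D2 * (1 - t) * \sum_(e in E) q e * Pe g e <= \sum_(e in E) m1 e * Qe g e.
  rewrite !mulr_sumr; apply: ler_sum => e He.
  have dn : d e ^+ 2 != 0 by rewrite expf_neq0 // gt_eqF ?Hd.
  rewrite -subr_ge0.
  have -> : m1 e * Qe g e - D2 * (1 - t) * (q e * Pe g e) = D2 * (t / k) * (Qe g e / d e ^+ 2).
    by rewrite /m1 /Pe; field; rewrite gt_eqF ?Hd //= -/k gt_eqF.
  apply: mulr_ge0; last by rewrite divr_ge0 ?Qe_ge0 ?sqr_ge0.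
  exact: (mulr_ge0 (ltW Dp) (divr_ge0 (ltW t0) (ltW kp))).
set X := \sum_(e in E) q e * Pe g e.
have e1 : 1 - t = (sg + th') / (sg + 2%:R * th').
  by rewrite /t; field; rewrite gt_eqF.
have H : D2 * (1 - t) * X <= sg + th'.
  by apply: (le_trans Hlow); rewrite Hsum ltW.
rewrite e1 in H.
set c := D2 * ((sg + th') / (sg + 2%:R * th')).
have cp : 0 < c by rewrite mulr_gt0 // divr_gt0 // ltr_wpDl ?ltW.
rewrite -(ler_pM2l cp).
have -> : c * (sg / D2 + th) = sg + th'.
  rewrite /c /th'; field.
  by rewrite gt_eqF //= gt_eqF // ltr_wpDl ?ltW // mulr_gt0.
by move: H; rewrite -/c.
Qed.

Definition S0 := \sum_u (m0 u)^-1.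
Definition SD := \sum_(e in E) (d e ^+ 2)^-1.
Definition Bc := 4%:R * S0 * SD.

Lemma good_pt g a : Good g -> g a ^+ 2 <= (m0 a)^-1.
Proof.
case=> vg mg.
have H : m0 a * g a ^+ 2 <= 1.
  rewrite -vg /var mg.
  rewrite (eq_bigr (fun x => m0 x * g x ^+ 2)); last by move=> x _; rewrite subr0.
  apply: (le_sum1 (P := xpredT) (F := fun x => m0 x * g x ^+ 2)) => // j _.
  by rewrite mulr_ge0 ?sqr_ge0 // ltW.
by rewrite -div1r ler_pdivlMr ?Hm // mulrC.
Qed.

Lemma Pe_bounds g e : Good g -> e \in E -> 0 <= Pe g e /\ Pe g e <= Bc.
Proof.
move=> Gg He; split; first by rewrite divr_ge0 ?Qe_ge0 ?sqr_ge0.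
have [a [b [ab Hab]]] := edge_pair He.
have hS : forall x, (m0 x)^-1 <= S0.
  move=> x; apply: (le_sum1 (P := xpredT) (F := fun x => (m0 x)^-1)) => // j _.
  by rewrite invr_ge0 ltW.
have HQ : Qe g e <= 4%:R * S0.
  rewrite Hab Qe_pair //.
  have ha := good_pt a Gg; have hb := good_pt b Gg; have := hS a; have := hS b.
  have := sqr_ge0 (g a + g b); nra.
have hD : (d e ^+ 2)^-1 <= SD.
  apply: (le_sum1 (P := fun e => e \in E) (F := fun e => (d e ^+ 2)^-1)) => // j _.
  by rewrite invr_ge0 sqr_ge0.
rewrite /Pe /Bc; apply: ler_pM => //; first exact: Qe_ge0.
  by rewrite invr_ge0 sqr_ge0.
Qed.

Lemma comb_single N' (psi : V -> 'rV[R]_N') a :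
  \sum_x ((x == a)%:R : R) *: psi x = psi a.
Proof.
rewrite (bigD1 a) //= eqxx scale1r big1 ?addr0 // => x /negbTE ->.
by rewrite scale0r.
Qed.

Lemma comb_diff N' (psi : V -> 'rV[R]_N') a b :
  \sum_x (((x == a)%:R - (x == b)%:R) : R) *: psi x = psi a - psi b.
Proof.
rewrite (eq_bigr (fun x => ((x == a)%:R : R) *: psi x - ((x == b)%:R : R) *: psi x)).
  by rewrite sumrB !comb_single.
by move=> x _; rewrite scalerBl.
Qed.

Lemma nsqN0 N' : nsqN (0 : 'rV[R]_N') = 0.
Proof. by rewrite /nsqN big1 // => i _; rewrite mxE expr0n. Qed.

Lemma Bc_gt0 (u v : V) : u != v -> 0 < Bc.
Proof.
move=> uv; have [e0 He0] := edge_exists uv.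
rewrite /Bc mulr_gt0 ?mulr_gt0 ?ltr0n //.
  apply: (lt_le_trans (y := (m0 u)^-1)); first by rewrite invr_gt0.
  apply: (le_sum1 (P := xpredT) (F := fun x => (m0 x)^-1)) => // j _.
  by rewrite invr_ge0 ltW.
apply: (lt_le_trans (y := (d e0 ^+ 2)^-1)); first by rewrite invr_gt0 exprn_gt0 ?Hd.
apply: (le_sum1 (P := fun e => e \in E) (F := fun e => (d e ^+ 2)^-1)) => // j _.
by rewrite invr_ge0 sqr_ge0.
Qed.

Lemma part2_core (u v : V) (uv : u != v) (th eta : R) (K : nat) :
  0 < th -> 0 < eta -> eta <= 2^-1 ->
  exists psi : V -> 'rV[R]_#|V|,
    \sum_x m0 x *: psi x = 0 /\
    (forall a b, [set a; b] \in E -> a != b ->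
       nsq (psi a - psi b) <= d [set a; b] ^+ 2 *
         ((K + #|V|)%:R * (sigma E m0 d / D2 + th) + Bc * #|E|%:R / eta
            + 2%:R * Bc * eta * (K + #|V|)%:R)) /\
    \sum_x m0 x * nsq (psi x) = (K + #|V|)%:R.
Proof.
move=> th0 eta0 etah.
have [e0 He0] := edge_exists uv.
have kp : (0 < #|E|)%N by apply/card_gt0P; exists e0.
have Bp := Bc_gt0 uv.
have Hbr0 : forall q : {set V} -> R, exists g, ((forall e, e \in E -> 0 <= q e) ->
    \sum_(e in E) q e = 1 -> Good g /\ \sum_(e in E) q e * Pe g e <= sigma E m0 d / D2 + th).
  move=> q; case: (pselect ((forall e, e \in E -> 0 <= q e) /\ \sum_(e in E) q e = 1)) => [[q0 q1]|nd].
    by have [g Hg] := BR uv q0 q1 th0; exists g.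
  by exists (fun _ => 0) => q0 q1; exfalso; apply: nd.
case: (boolp.choice Hbr0) => br Hbr.
have PB : forall g e, Good g -> e \in E -> 0 <= Pe g e /\ Pe g e <= Bc.
  by move=> g e Gg He; exact: Pe_bounds.
set gs := fun t => xs E Pe Bc eta br t.
have Ggs : forall t, Good (gs t) := good_xs Bc eta kp Hbr.
have Hmw := mwu_main Bp kp eta0 etah PB Hbr (K + #|V|).
pose psi0 : V -> 'rV[R]_(K + #|V|) := fun x => \row_(t < K + #|V|) gs t x.
have [psi Hpres] := reduce psi0.
exists psi; split; [|split].
- apply: nsqN_eq0; rewrite Hpres.
  have -> : \sum_x m0 x *: psi0 x = 0.
    apply/rowP => t; rewrite summxE mxE.
    rewrite (eq_bigr (fun x => m0 x * gs t x)); last by move=> x _; rewrite !mxE.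
    by rewrite sumE (Ggs t).2 mulr0.
  exact: nsqN0.
- move=> a b He ab.
  have -> : nsq (psi a - psi b) = nsqN (psi a - psi b) by [].
  rewrite -comb_diff Hpres comb_diff.
  have -> : nsqN (psi0 a - psi0 b) = \sum_(t < K + #|V|) d [set a; b] ^+ 2 * Pe (gs t) [set a; b].
    apply: eq_bigr => t _; rewrite /Pe mulrC divfK; last by rewrite expf_neq0 // gt_eqF ?Hd.
    by rewrite Qe_pair // !mxE.
  rewrite -mulr_sumr ler_wpM2l ?sqr_ge0 //; exact: Hmw.
- have -> : \sum_x m0 x * nsq (psi x) = \sum_x m0 x * nsqN (psi0 x).
    apply: eq_bigr => x _; congr (_ * _).
    have -> : nsq (psi x) = nsqN (psi x) by [].
    by rewrite -comb_single Hpres comb_single.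
  rewrite /nsqN; under eq_bigr do rewrite mulr_sumr.
  rewrite exchange_big /=.
  rewrite (eq_bigr (fun _ => 1)); first by rewrite sumr_const card_ord.
  move=> t _; rewrite (eq_bigr (fun x => m0 x * gs t x ^+ 2)); last by move=> x _; rewrite mxE.
  by rewrite sumsq_decomp (Ggs t).1 (Ggs t).2 expr0n /= mulr0 add0r.
Qed.

Definition i0 : 'I_#|V| := Ordinal HV.
Definition e0 : 'rV[R]_#|V| := \row_(j < #|V|) ((j == i0)%:R : R).

Lemma nsq_e0 : nsq e0 = 1.
Proof.
rewrite /nsq (bigD1 i0) //= mxE eqxx expr1n big1 ?addr0 // => i /negbTE Hi.
by rewrite mxE Hi expr0n.
Qed.

Lemma nsq_add (x y : 'rV[R]_#|V|) t :
  nsq (x + t *: y) = nsq x + 2%:R * t * dotN x y + t ^+ 2 * nsq y.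
Proof.
have -> : x + t *: y = x - (- t) *: y by rewrite scaleNr opprK.
have -> : nsq (x - (- t) *: y) = nsqN (x - (- t) *: y) by [].
by rewrite nsqN_expand sqrrN /nsqN /nsq; ring.
Qed.

Lemma dotN_e0 (x : 'rV[R]_#|V|) : dotN x e0 = x ord0 i0.
Proof.
rewrite /dotN (bigD1 i0) //= mxE eqxx mulr1 big1 ?addr0 // => i /negbTE Hi.
by rewrite mxE Hi mulr0.
Qed.

Lemma nsq_scale (x : 'rV[R]_#|V|) r : nsq (r *: x) = r ^+ 2 * nsq x.
Proof. by rewrite /nsq mulr_sumr; apply: eq_bigr => i _; rewrite mxE exprMn. Qed.

Lemma enorm_le_d (x : 'rV[R]_#|V|) e : e \in E -> nsq x <= d e ^+ 2 -> enorm x <= d e.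
Proof.
move=> He H; rewrite /enorm -(gtr0_norm (Hd He)) -sqrtr_sqr ler_sqrt //; exact: sqr_ge0.
Qed.

Lemma shift_emb (chi : V -> 'rV[R]_#|V|) :
  \sum_x m0 x *: chi x = 0 ->
  (forall a b, [set a; b] \in E -> a != b -> nsq (chi a - chi b) <= d [set a; b] ^+ 2) ->
  \sum_x m0 x * nsq (chi x) <= M ->
  exists phi, admissible_embedding E m0 d phi /\
    enorm (bar m0 phi) ^+ 2 = 1 - (\sum_x m0 x * nsq (chi x)) / M.
Proof.
move=> H0 Hed HW; set W := \sum_x m0 x * nsq (chi x).
have c2p : 0 <= 1 - W / M by rewrite subr_ge0 ler_pdivrMr ?M_gt0 // mul1r.
set c0 := Num.sqrt (1 - W / M).
have c02 : c0 ^+ 2 = 1 - W / M by rewrite sqr_sqrtr.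
have Hcoord : \sum_x m0 x * chi x ord0 i0 = 0.
  transitivity ((\sum_x m0 x *: chi x) ord0 i0); last by rewrite H0 mxE.
  by rewrite summxE; apply: eq_bigr => x _; rewrite mxE.
exists (fun x => chi x + c0 *: e0); split; first split.
- rewrite (eq_bigr (fun x => m0 x * (nsq (chi x) + 2%:R * c0 * chi x ord0 i0 + c0 ^+ 2))); last first.
    by move=> x _; rewrite enorm_sq nsq_add dotN_e0 nsq_e0 mulr1.
  rewrite (eq_bigr (fun x => m0 x * nsq (chi x) + 2%:R * c0 * (m0 x * chi x ord0 i0) + c0 ^+ 2 * m0 x)); last by move=> x _; ring.
  rewrite !big_split /= -!mulr_sumr Hcoord -/W mulr0 addr0 c02 -/(total_mass m0).
  by rewrite mulrBl mul1r divfK ?M_neq0 // addrC subrK.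
- move=> a b He ab; apply: enorm_le_d => //.
  have -> : chi a + c0 *: e0 - (chi b + c0 *: e0) = chi a - chi b by rewrite opprD addrACA subrr addr0.
  exact: Hed.
- have -> : bar m0 (fun x => chi x + c0 *: e0) = c0 *: e0.
    rewrite /bar (eq_bigr (fun x => m0 x *: chi x + m0 x *: (c0 *: e0))); last by move=> x _; rewrite scalerDr.
    rewrite big_split /= H0 add0r -scaler_suml -/(total_mass m0) scalerA mulVf ?M_neq0 //.
    by rewrite scale1r.
  by rewrite enorm_sq nsq_scale nsq_e0 mulr1.
Qed.

Lemma scale_shift (chi : V -> 'rV[R]_#|V|) (N w : R) :
  0 < N -> 0 < w ->
  \sum_x m0 x *: chi x = 0 ->
  (forall a b, [set a; b] \in E -> a != b -> nsq (chi a - chi b) <= d [set a; b] ^+ 2 * (N * w)) ->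
  \sum_x m0 x * nsq (chi x) = N ->
  exists phi, admissible_embedding E m0 d phi /\
    enorm (bar m0 phi) ^+ 2 <= Num.max 0 (1 - 1 / (M * w)).
Proof.
move=> Np wp H0 Hed HW.
have Hsc : forall r, 0 <= r -> r ^+ 2 * (N * w) <= 1 -> r ^+ 2 * N <= M ->
    exists phi, admissible_embedding E m0 d phi /\
      enorm (bar m0 phi) ^+ 2 = 1 - r ^+ 2 * N / M.
  move=> r r0 rle rM.
  have HW' : \sum_x m0 x * nsq (r *: chi x) = r ^+ 2 * N.
    rewrite -HW mulr_sumr; apply: eq_bigr => x _; rewrite nsq_scale; ring.
  have [|||phi [Hp Hb]] := @shift_emb (fun x => r *: chi x).
  - rewrite (eq_bigr (fun x => r *: (m0 x *: chi x))); last by move=> x _; rewrite !scalerA mulrC.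
    by rewrite -scaler_sumr H0 scaler0.
  - move=> a b He ab; rewrite -scalerBr nsq_scale.
    apply: (le_trans (ler_wpM2l (sqr_ge0 r) (Hed a b He ab))).
    rewrite mulrCA -[X in _ <= X]mulr1 ler_wpM2l ?sqr_ge0 //.
  - by rewrite HW'.
  by exists phi; split => //; rewrite Hb HW'.
have [Mw|Mw] := lerP 1 (M * w).
  have v0 : 0 <= 1 / (N * w) by rewrite divr_ge0 // ltW // mulr_gt0.
  have [|||phi [Hp Hb]] := Hsc (Num.sqrt (1 / (N * w))).
  - exact: sqrtr_ge0.
  - by rewrite sqr_sqrtr // div1r mulVf ?lexx // gt_eqF // mulr_gt0.
  - rewrite sqr_sqrtr //.
    have -> : 1 / (N * w) * N = 1 / w by field; rewrite !gt_eqF.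
    by rewrite ler_pdivrMr.
  exists phi; split => //; rewrite Hb le_max; apply/orP; right.
  rewrite sqr_sqrtr // le_eqVlt; apply/orP; left; apply/eqP.
  by field; rewrite !gt_eqF ?M_gt0.
have v0 : 0 <= M / N by rewrite divr_ge0 // ltW ?M_gt0.
have [|||phi [Hp Hb]] := Hsc (Num.sqrt (M / N)).
- exact: sqrtr_ge0.
- rewrite sqr_sqrtr // mulrA divfK ?gt_eqF //; exact: ltW.
- by rewrite sqr_sqrtr // divfK ?gt_eqF.
exists phi; split => //; rewrite Hb le_max; apply/orP; left.
by rewrite sqr_sqrtr // divfK ?gt_eqF // mulfV ?subrr // M_neq0.
Qed.

Lemma part2 (u v : V) (uv : u != v) eps : 0 < eps ->
  exists phi, admissible_embedding E m0 d phi /\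
    enorm (bar m0 phi) ^+ 2 <= Num.max (1 - D2 / M / sigma E m0 d) 0 + eps.
Proof.
move=> ep.
have sp := sigma_gt0 uv; have Dp := D2_gt0 uv; have Bp := Bc_gt0 uv.
have Mp := M_gt0.
have [e0' He0'] := edge_exists uv.
set sg := sigma E m0 d in sp *.
set v0 := sg / D2.
have v0p : 0 < v0 by rewrite divr_gt0.
set e1 := eps * M * v0 ^+ 2.
have e1p : 0 < e1 by apply: mulr_gt0; [exact: mulr_gt0 | exact: exprn_gt0].
set th := e1 / 3%:R.
have th0 : 0 < th by rewrite divr_gt0 ?ltr0n.
set k : R := #|E|%:R.
have kp : 0 < k by rewrite ltr0n; apply/card_gt0P; exists e0'.
set eta := e1 / (6%:R * Bc + 2%:R * e1).
have den : 0 < 6%:R * Bc + 2%:R * e1 by rewrite addr_gt0 // mulr_gt0 ?ltr0n.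
have eta0 : 0 < eta by rewrite divr_gt0.
have etah : eta <= 2^-1.
  by rewrite ler_pdivrMr //; move: Bp e1p; lra.
set K := Num.trunc (3%:R * Bc * k / (eta * e1)).
have [chi [H0 [Hed HW]]] := part2_core uv K th0 eta0 etah.
set NR : R := (K + #|V|)%:R.
have NRp : 0 < NR by rewrite ltr0n addn_gt0 HV orbT.
have HK : 3%:R * Bc * k / (eta * e1) < NR.
  apply: (lt_le_trans (truncnS_gt _)); rewrite ler_nat -addn1 leq_add2l //.
set gam := th + Bc * k / (eta * NR) + 2%:R * Bc * eta.
have gam0 : 0 <= gam.
  apply: addr_ge0; first apply: addr_ge0.
  - exact: ltW.
  - exact: divr_ge0 (mulr_ge0 (ltW Bp) (ltW kp)) (ltW (mulr_gt0 eta0 NRp)).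
  - exact: mulr_ge0 (mulr_ge0 (ler0n _ 2) (ltW Bp)) (ltW eta0).
set w := v0 + gam.
have wp : 0 < w by apply: (lt_le_trans v0p); rewrite lerDl.
have Lw : NR * (sg / D2 + th) + Bc * k / eta + 2%:R * Bc * eta * NR = NR * w.
  rewrite /w /gam /v0; field.
  by rewrite -natrD (gt_eqF NRp) (gt_eqF eta0) (gt_eqF Dp).
have [|phi [Hp Hb]] := scale_shift NRp wp H0 _ HW.
  by move=> a b He ab; rewrite -Lw; exact: Hed.
exists phi; split => //; apply: (le_trans Hb).
set a := 1 - D2 / M / sg.
have ga : a <= Num.max a 0 by rewrite le_max lexx.
have g0 : 0 <= Num.max a 0 by rewrite le_max lexx orbT.
rewrite ge_max; apply/andP; split; first by rewrite addr_ge0 // ltW.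
apply: (le_trans _ (lerD ga (lexx eps))).
have g1 : Bc * k / (eta * NR) <= e1 / 3%:R.
  have pe : 0 < eta * e1 := mulr_gt0 eta0 e1p.
  have pn : 0 < eta * NR := mulr_gt0 eta0 NRp.
  rewrite ler_pdivrMr //.
  move: HK; rewrite ltr_pdivrMr // => HK.
  move: HK; nra.
have g2 : 2%:R * Bc * eta <= e1 / 3%:R.
  rewrite /eta mulrA ler_pdivrMr //.
  by move: Bp e1p; nra.
have gle : gam <= e1 by rewrite /gam /th; move: g1 g2; lra.
have -> : a = 1 - 1 / (M * v0) by rewrite /a /v0; field; rewrite !gt_eqF.
have wE : w = v0 + gam by [].
have key : 1 / (M * v0) - 1 / (M * (v0 + gam)) = gam / (M * v0 * (v0 + gam)).
  have wp' : 0 < v0 + gam := wp.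
  by field; rewrite (gt_eqF wp') (gt_eqF v0p) M_neq0 /=.
have hp : 0 < M * v0 * (v0 + gam) := mulr_gt0 (mulr_gt0 Mp v0p) wp.
have key2 : gam / (M * v0 * (v0 + gam)) <= eps.
  rewrite ler_pdivrMr //.
  have := mulr_ge0 (mulr_ge0 (mulr_ge0 (ltW ep) (ltW Mp)) (ltW v0p)) gam0.
  move: gle; rewrite /e1; nra.
rewrite wE; move: key key2; lra.
Qed.

Definition cst : V -> 'rV[R]_#|V| := fun _ => e0.

Lemma cst_adm : admissible_embedding E m0 d cst.
Proof.
split.
  by rewrite (eq_bigr (fun u => m0 u)) // => u _; rewrite enorm_sq nsq_e0 mulr1.
move=> a b He ab; rewrite /cst subrr; apply: enorm_le_d => //.
rewrite /nsq big1 ?sqr_ge0 // => i _; by rewrite mxE expr0n.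
Qed.

Lemma cst_bar : enorm (bar m0 cst) ^+ 2 = 1.
Proof.
rewrite /bar /cst -scaler_suml -/(total_mass m0) scalerA mulVf ?M_neq0 // scale1r.
by rewrite enorm_sq nsq_e0.
Qed.

Lemma main_sec : delta E m0 d = Num.max (1 - D2 / M / sigma E m0 d) 0.
Proof.
rewrite /delta.
set S := [set enorm (bar m0 phi) ^+ 2 | phi in admissible_embedding E m0 d]%classic.
have ne : (S !=set0)%classic by exists (enorm (bar m0 cst) ^+ 2); exists cst => //; exact: cst_adm.
have hl : has_lbound S by exists 0 => _ [phi _ <-]; exact: sqr_ge0.
apply/eqP; rewrite eq_le; apply/andP; split; last first.
  apply: lb_le_inf; first exact: ne.
  by move=> _ [phi Hp <-]; exact: part1.
apply/ler_addgt0Pr => eps ep.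
case: (pselect (exists u v : V, u != v)) => [[u [v uv]]|nuv].
  have [phi [Hp Hb]] := part2 uv ep.
  by apply: le_trans Hb; apply: (ge_inf hl); exists phi.
have Hc1 : S (enorm (bar m0 cst) ^+ 2) by exists cst => //; exact: cst_adm.
apply: (le_trans (ge_inf hl Hc1)); rewrite cst_bar no_edges // !mul0r subr0.
have -> : Num.max (1 : R) 0 = 1 by apply/max_idPl; exact: ler01.
by rewrite lerDl ltW.
Qed.

End Basics.

Unset Implicit Arguments.

Theorem corollary2p5 (R : realType) (V : finType) (E : {set {set V}})
    (m0 : V -> R) (d : {set V} -> R) :
  (0 < #|V|)%N ->
  simple_graph E ->
  connected_graph E ->
  (forall u, 0 < m0 u) ->
  (forall e, e \in E -> 0 < d e) ->
  delta E m0 d =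
    Num.max (1 - (Dsq E d / total_mass m0) / sigma E m0 d) 0.
Proof.
move=> HV Hs Hc Hm Hd; exact: main_sec.
Qed.
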